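(* Let $R$ be a ring such that $R/J(R)$ is an abelian $\pi$-regular ring. Then $R$ is feckly clean.
   Context: Rings are associative with identity, not necessarily commutative; $J(R)$ is the Jacobson radical. A ring is abelian if all its idempotents are central. A ring $S$ is $\pi$-regular if for every $a\in S$ there is $n\in\mathbb{N}$ with $a^n\in a^nSa^n$. An element $u\in R$ is full if $RuR=R$. An element $a\in R$ is feckly clean if there exist $e\in R$ and a full element $u\in R$ with $a=e+u$ and $eR(1-e)\subseteq J(R)$; $R$ is feckly clean if every element is feckly clean. *)

(* Defs.v *)
From HB Require Import structures.
From mathcomp Require Import all_boot all_order all_algebra.
Set Implicit Arguments. Unset Strict Implicit. Unset Printing Implicit Defensive.
Import GRing.Theory.
Local Open Scope ring_scope.

Definition left_ideal (R : pzRingType) (I : R -> Prop) : Prop :=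
  [/\ I 0, (forall x y, I x -> I y -> I (x + y)) & (forall r x, I x -> I (r * x))].

Definition maximal_left_ideal (R : pzRingType) (I : R -> Prop) : Prop :=
  [/\ left_ideal I, ~ I 1 &
      forall K : R -> Prop, left_ideal K -> (forall x, I x -> K x) ->
        (forall x, K x <-> I x) \/ (forall x, K x)].

Definition jacobson (R : pzRingType) (x : R) : Prop :=
  forall I : R -> Prop, maximal_left_ideal I -> I x.

(* u is full: R u R = R, i.e. 1 is a finite sum of elements r u s. *)
Definition full (R : pzRingType) (u : R) : Prop :=
  exists s : seq (R * R), \sum_(p <- s) p.1 * u * p.2 = 1.

Definition feckly_clean_elt (R : pzRingType) (a : R) : Prop :=
  exists e u : R, [/\ full u, a = e + u &
    forall r : R, jacobson (e * r * (1 - e))].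

Definition feckly_clean (R : pzRingType) : Prop :=
  forall a : R, feckly_clean_elt a.

(* Properties of the quotient R/J(R), stated on representatives:
   x + J(R) = y + J(R)  iff  jacobson (x - y). *)

(* R/J(R) is abelian: every idempotent of R/J(R) is central. *)
Definition quot_jacobson_abelian (R : pzRingType) : Prop :=
  forall e : R, jacobson (e * e - e) ->
    forall r : R, jacobson (e * r - r * e).

Definition quot_jacobson_pi_regular (R : pzRingType) : Prop :=
  forall a : R, exists n : nat, exists b : R,
    (0 < n)%N /\ jacobson (a ^+ n - a ^+ n * b * a ^+ n).

(* Main.v *)
Require Import Defs.
From mathcomp Require Import all_boot all_order all_algebra.
From mathcomp Require Import boolp classical_sets.
From Stdlib Require Import Classical Setoid Morphisms.
Set Implicit Arguments. Unset Strict Implicit. Unset Printing Implicit Defensive.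
Import GRing.Theory.
Local Open Scope ring_scope.

Section Jac.
Variable R : pzRingType.
Local Notation J := (@jacobson R).

Lemma J0 : J 0.
Proof. by move=> I [[I0 _ _] _ _]. Qed.
Lemma JD x y : J x -> J y -> J (x + y).
Proof. by move=> Hx Hy I MI; case: (MI) => [[_ ID _] _ _]; apply: ID; [apply: Hx|apply: Hy]. Qed.
Lemma JMl r x : J x -> J (r * x).
Proof. by move=> Hx I MI; case: (MI) => [[_ _ IM] _ _]; apply: IM; apply: Hx. Qed.
Lemma JN x : J x -> J (- x).
Proof. by move=> Hx; rewrite -mulN1r; apply: JMl. Qed.
Lemma JB x y : J x -> J y -> J (x - y).
Proof. by move=> Hx Hy; apply: JD => //; apply: JN. Qed.

Lemma JMr x r : J x -> J (x * r).
Proof.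
move=> Jx I MI; have [[I0 ID IM] I1 Imax] := MI.
case: (classic (forall y, I (y * r))) => [H|]; first exact: H.
move=> /not_all_ex_not [y0 Hy0].
pose Ir := fun y => I (y * r).
suff MIr : maximal_left_ideal Ir by exact: Jx _ MIr.
split.
- split; rewrite /Ir.
  + by rewrite mul0r.
  + by move=> x1 y1 H1 H2; rewrite mulrDl; apply: ID.
  + by move=> c x1 H1; rewrite -mulrA; apply: IM.
- move=> Ir1; apply: Hy0; rewrite /Ir in Ir1.
  rewrite mul1r in Ir1; exact: IM y0 _ Ir1.
- move=> K [K0 KD KM] sub.
  pose K' z := exists k i, [/\ K k, I i & z = k * r + i].
  have LK' : left_ideal K'.
    split.
    + by exists 0, 0; rewrite mul0r addr0.
    + move=> x1 y1 [k1 [i1 [Hk1 Hi1 ->]]] [k2 [i2 [Hk2 Hi2 ->]]].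
      exists (k1 + k2), (i1 + i2); split; [exact: KD|exact: ID|].
      by rewrite mulrDl addrACA.
    + move=> c x1 [k1 [i1 [Hk1 Hi1 ->]]].
      exists (c * k1), (c * i1); split; [exact: KM|exact: IM|].
      by rewrite mulrDr mulrA.
  have subK' : forall z, I z -> K' z.
    by move=> z Iz; exists 0, z; rewrite mul0r add0r.
  case: (Imax K' LK' subK') => [eq|all].
  + left => z; split; last exact: sub.
    move=> Kz; rewrite /Ir; apply/eq; exists z, 0; split => //; by rewrite addr0.
  + right => y; have [k [i [Hk Hi E]]] := all (y * r).
    have Hyk : Ir (y - k) by rewrite /Ir mulrBl E addrAC subrr add0r.
    by rewrite -(subrK k y); apply: KD => //; apply: sub.
Qed.

Lemma Jinv j : J j -> exists v, v * (1 - j) = 1.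
Proof.
move=> Jj; apply: NNPP => Hno.
pose L z := exists v, z = v * (1 - j).
pose P (A : set R) := A = set0 \/ [/\ left_ideal A, (forall z, L z -> A z) & ~ A 1].
have [A [PA Amax]] : exists A, P A /\ forall B, (A `<` B)%classic -> ~ P B.
  apply: Zorn_bigcup => F FP Ftot.
  have hX : forall X z, F X -> X z -> [/\ left_ideal X, (forall z, L z -> X z) & ~ X 1].
    move=> X z FX Xz; case: (FP X FX) => // X0; by rewrite X0 in Xz.
  case: (classic (exists X z, F X /\ X z)) => [[X0 [z0 [FX0 Xz0]]]|Hne]; last first.
    left; apply/seteqP; split => z // [X FX Xz]; apply: Hne; by exists X, z.
  right; split.
  - split.
    + have [[I0 _ _] _ _] := hX _ _ FX0 Xz0; by exists X0.
    + move=> x y [X FX Xx] [Y FY Yy].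
      have [[_ XD _] _ _] := hX _ _ FX Xx; have [[_ YD _] _ _] := hX _ _ FY Yy.
      case: (Ftot X Y FX FY) => [XY|YX].
      * exists Y => //; apply: YD => //; exact: XY.
      * exists X => //; apply: XD => //; exact: YX.
    + move=> r x [X FX Xx]; have [[_ _ XM] _ _] := hX _ _ FX Xx; exists X => //; exact: XM.
  - move=> z Lz; have [_ HL _] := hX _ _ FX0 Xz0; exists X0 => //; exact: HL.
  - move=> [X FX X1]; have [_ _ HX1] := hX _ _ FX X1; exact: HX1.
have LL : left_ideal L.
  split.
  + by exists 0; rewrite mul0r.
  + by move=> x y [v1 ->] [v2 ->]; exists (v1 + v2); rewrite mulrDl.
  + by move=> r x [v ->]; exists (r * v); rewrite mulrA.
have L1 : ~ L 1 by move=> [v Hv]; apply: Hno; exists v.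
case: PA => [A0|[LA HLA A1]].
  apply: (Amax L); last by right.
  rewrite A0; split => // H; have [I0 _ _] := LL; exact: (H 0 I0).
have [_ AD _] := LA.
have MA : maximal_left_ideal A.
  split => // K LK AK.
  case: (classic (K 1)) => [K1|K1].
    right => x; rewrite -[x]mulr1; have [_ _ KM] := LK; exact: KM.
  left => x; split; last exact: AK.
  move=> Kx; apply: NNPP => Ax; apply: (Amax K).
    split => // H; apply: Ax; exact: H.
  right; split => // z Lz; apply: AK; exact: HLA.
have Aj := Jj A MA.
have A1j : A (1 - j) by apply: HLA; exists 1; rewrite mul1r.
by apply: A1; rewrite -(subrK j 1); apply: AD.
Qed.

End Jac.

Section Cong.
Variable R : pzRingType.
Local Notation J := (@jacobson R).
Definition eqJ (x y : R) := J (x - y).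

#[local] Instance eqJ_equiv : Equivalence eqJ.
Proof.
split.
- by move=> x; rewrite /eqJ subrr; apply: J0.
- by move=> x y H; rewrite /eqJ -opprB; apply: JN.
- by move=> x y z H1 H2; rewrite /eqJ -(subrKA y); apply: JD.
Qed.

#[local] Instance add_eqJ : Proper (eqJ ==> eqJ ==> eqJ) (@GRing.add R).
Proof. by move=> x x' H y y' H'; rewrite /eqJ opprD addrACA; apply: JD. Qed.
#[local] Instance opp_eqJ : Proper (eqJ ==> eqJ) (@GRing.opp R).
Proof. by move=> x x' H; rewrite /eqJ -opprD; apply: JN. Qed.
#[local] Instance mul_eqJ : Proper (eqJ ==> eqJ ==> eqJ) (@GRing.mul R).
Proof.
move=> x x' H y y' H'; rewrite /eqJ -(subrKA (x' * y)) -mulrBl -mulrBr.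
by apply: JD; [apply: JMr|apply: JMl].
Qed.


Lemma tele_gen (y a : R) : (forall r, eqJ (y * r) (r * y)) -> eqJ (y * y) y ->
  forall m, exists s, eqJ (s * (y - a * y)) (y - y * (a * y) ^+ m).
Proof.
move=> yc yy.
elim=> [|m [s IH]]; first by exists 0; rewrite mul0r expr0 mulr1 subrr; reflexivity.
exists (s + y * (a * y) ^+ m).
rewrite mulrDl IH mulrBr -(mulrA _ _ y) -(yc ((a * y) ^+ m)) (mulrA y y) yy.
rewrite exprSr (mulrA y ((a * y) ^+ m)) addrA subrK; reflexivity.
Qed.
End Cong.

Section Core.
Variable R : pzRingType.
Local Notation J := (@jacobson R).
Local Notation eqJ := (@eqJ R).
Existing Instance eqJ_equiv. Existing Instance add_eqJ.
Existing Instance opp_eqJ. Existing Instance mul_eqJ.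
Variables (a b : R) (n : nat).
Hypothesis Hn : (0 < n)%N.
Hypothesis Hpi : J (a ^+ n - a ^+ n * b * a ^+ n).
Hypothesis Hab : quot_jacobson_abelian R.
Let x := a ^+ n.
Let h := b * x.
Let y := 1 - h.

Lemma F2 : J (h * h - h).
Proof.
have -> : h * h - h = - (b * (x - x * b * x)).
  by rewrite /h mulrBr opprB !mulrA.
by apply: JN; apply: JMl.
Qed.

Lemma F2e : eqJ (h * h) h. Proof. exact: F2. Qed.

Lemma hc r : eqJ (h * r) (r * h). Proof. exact: Hab F2 r. Qed.

Lemma yc r : eqJ (y * r) (r * y).
Proof.
rewrite /y mulrBl mulrBr mul1r mulr1 (hc r); reflexivity.
Qed.

Lemma xh : eqJ (x * h) x.
Proof.
change (J (x * h - x)).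
have -> : x * h - x = - (x - x * b * x) by rewrite /h mulrA opprB.
exact: JN.
Qed.

Lemma hh : eqJ (h * h) h. Proof. exact: F2. Qed.

Lemma hy : eqJ (h * y) 0.
Proof. rewrite /y mulrBr mulr1 hh subrr; reflexivity. Qed.

Lemma yh : eqJ (y * h) 0.
Proof. rewrite /y mulrBl mul1r hh subrr; reflexivity. Qed.

Lemma yy : eqJ (y * y) y.
Proof. rewrite {1}/y mulrBl mul1r hy subr0; reflexivity. Qed.

Lemma powy m : eqJ (y * (a * y) ^+ m) (a ^+ m * y).
Proof.
elim: m => [|m IH]; first by rewrite !expr0 mulr1 mul1r; reflexivity.
rewrite exprSr (mulrA y) IH -mulrA (mulrA y) (yc a) -!mulrA yy.
rewrite exprSr mulrA; reflexivity.
Qed.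

Lemma tele m : exists s, eqJ (s * (y - a * y)) (y - y * (a * y) ^+ m).
Proof. exact: (@tele_gen R y a yc yy m). Qed.

Lemma xy : eqJ (x * y) 0.
Proof. rewrite /y mulrBr mulr1 xh subrr; reflexivity. Qed.

Lemma main_w : exists w, eqJ (w * (a - y)) 1.
Proof.
have [s Hs] := tele n.
rewrite powy -/x xy subr0 in Hs.
exists (b * a ^+ n.-1 * h - s * y).
rewrite mulrBl.
have -> : s * y * (a - y) = s * (y * (a - y)) by rewrite mulrA.
rewrite (yc (a - y)) mulrBl yy.
rewrite -(opprB y (a * y)) mulrN opprK Hs.
rewrite -(mulrA (b * a ^+ n.-1) h) (mulrBr h) (hc a) hy subr0 (mulrA (b * a ^+ n.-1)) -(mulrA b).
have -> : a ^+ n.-1 * a = x by rewrite -exprSr prednK.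
rewrite -/h hh /y.
rewrite addrC subrK; reflexivity.
Qed.
Lemma ecorner r : J (y * r * (1 - y)).
Proof.
have -> : y * r * (1 - y) = y * r * (1 - y) - 0 by rewrite subr0.
change (eqJ (y * r * (1 - y)) 0).
rewrite {2}/y subKr -mulrA -(hc r) mulrA yh mul0r; reflexivity.
Qed.
End Core.

Theorem theorem4p1 (R : pzRingType) :
  quot_jacobson_abelian R -> quot_jacobson_pi_regular R -> feckly_clean R.
Proof.
move=> Hab Hpi a; have [n [b [Hn Hj]]] := Hpi a.
have [w Hw] := main_w Hn Hj Hab.
set y := 1 - b * a ^+ n in Hw *.
exists y, (a - y); split.
- have Jj : jacobson (1 - w * (a - y)) by rewrite -opprB; apply: JN.
  have [v Hv] := Jinv Jj; rewrite subKr in Hv.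
  by exists [:: (v * w, 1)]; rewrite big_seq1 /= mulr1 -mulrA.
- by rewrite addrC subrK.
- exact: ecorner.
Qed.
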